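(* Let $\Phi$ be a unit norm tight frame in $\mathbb{R}^d$ with $K$ atoms, frame constant $A=K/d$ and coherence $\mu$, and let $1\le S\le K$. Let $c\in\mathbb{R}^K$ with $c_1\ge c_2\ge\dots\ge c_K\ge0$ and $\|c\|_2=1$, let $x=c_{p,\sigma}$ with probability $(2^KK!)^{-1}$ for every permutation $p$ and sign sequence $\sigma$, and let $y=\Phi x$. Suppose that for all $\sigma,p$, $$\|P_{I_p}(\Phi)\Phi c_{p,\sigma}\|_2>\max_{|I|\le S,\ I\ne I_p}\|P_I(\Phi)\Phi c_{p,\sigma}\|_2,\qquad I_p:=p^{-1}(\{1,\dots,S\}).$$ Then $\Phi$ is a local maximum of $$\max_{\Psi\in\mathcal D}\ \mathbb{E}_y\Big(\max_{|I|\le S}\|P_I(\Psi)y\|_2^2\Big).$$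
   Context: $\mathcal D$ is the set of dictionaries $\Psi=(\psi_1,\dots,\psi_K)$, $\psi_i\in\mathbb{R}^d$, $\|\psi_i\|_2=1$. For $I\subseteq\{1,\dots,K\}$, $\Psi_I$ is the submatrix with columns $(\psi_i)_{i\in I}$ and $P_I(\Psi)=\Psi_I\Psi_I^\dagger$ is the orthogonal projection onto the span of $(\psi_i)_{i\in I}$ ($\dagger$ = Moore–Penrose pseudoinverse). Unit norm tight frame with frame constant $A$: $\sum_i|\langle\phi_i,v\rangle|^2=A\|v\|_2^2$ for all $v$; coherence $\mu=\max_{i\ne j}|\langle\phi_i,\phi_j\rangle|$. $c_{p,\sigma}(i)=\sigma_ic_{p(i)}$. *)

(* Defs.v *)
From HB Require Import structures.
From mathcomp Require Import all_boot all_order all_algebra all_fingroup.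
Set Implicit Arguments. Unset Strict Implicit. Unset Printing Implicit Defensive.
Import Order.TTheory GRing.Theory Num.Theory.
Local Open Scope ring_scope.

Definition norm2 {R : rcfType} {n : nat} (v : 'cV[R]_n) : R :=
  Num.sqrt (\sum_(i < n) v i 0 ^+ 2).

Definition dotv {R : rcfType} {n : nat} (u v : 'cV[R]_n) : R :=
  \sum_(i < n) u i 0 * v i 0.

(* Moore--Penrose pseudoinverse, via the full-rank factorisation
   A = col_base A *m row_base A  (A^+ = F^T (F F^T)^-1 (C^T C)^-1 C^T). *)
Definition pinv {R : rcfType} {m n : nat} (A : 'M[R]_(m, n)) : 'M[R]_(n, m) :=
  (row_base A)^T *m invmx (row_base A *m (row_base A)^T)
    *m invmx ((col_base A)^T *m col_base A) *m (col_base A)^T.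

Definition subcols {R : rcfType} {d K : nat} (Psi : 'M[R]_(d, K))
  (I : {set 'I_K}) : 'M[R]_(d, #|I|) :=
  colsub (fun j : 'I_#|I| => enum_val j) Psi.

Definition projI {R : rcfType} {d K : nat} (I : {set 'I_K})
  (Psi : 'M[R]_(d, K)) : 'M[R]_d :=
  subcols Psi I *m pinv (subcols Psi I).

Definition is_dict {R : rcfType} {d K : nat} (Psi : 'M[R]_(d, K)) : Prop :=
  forall i : 'I_K, norm2 (col i Psi) = 1.

Definition tight_frame {R : rcfType} {d K : nat} (Phi : 'M[R]_(d, K)) (A : R)
  : Prop :=
  forall v : 'cV[R]_d,
    \sum_(i < K) (dotv (col i Phi) v) ^+ 2 = A * norm2 v ^+ 2.

(* Coherence (not needed in the conclusion, recorded for completeness). *)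
Definition coherence {R : rcfType} {d K : nat} (Phi : 'M[R]_(d, K)) : R :=
  \big[Num.max/0]_(ij : 'I_K * 'I_K | ij.1 != ij.2)
     `|dotv (col ij.1 Phi) (col ij.2 Phi)|.

(* c_{p,sigma}(i) = sigma_i c_{p(i)}, sign sigma_i = (-1)^(s i). *)
Definition cps {R : rcfType} {K : nat} (c : 'cV[R]_K) (p : 'S_K)
  (s : {ffun 'I_K -> bool}) : 'cV[R]_K :=
  \col_i ((-1) ^+ s i * c (p i) 0).

(* I_p = p^{-1}({1,...,S}) (0-indexed: p i < S). *)
Definition Ip {K : nat} (S : nat) (p : 'S_K) : {set 'I_K} :=
  [set i | (p i < S)%N].

Definition best_proj {R : rcfType} {d K : nat} (S : nat) (Psi : 'M[R]_(d, K))
  (y : 'cV[R]_d) : R :=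
  \big[Num.max/0]_(I : {set 'I_K} | (#|I| <= S)%N) norm2 (projI I Psi *m y) ^+ 2.

Definition objective {R : rcfType} {d K : nat} (S : nat) (Phi : 'M[R]_(d, K))
  (c : 'cV[R]_K) (Psi : 'M[R]_(d, K)) : R :=
  ((2 ^ K * K`!)%:R)^-1 *
  \sum_(p : 'S_K) \sum_(s : {ffun 'I_K -> bool})
     best_proj S Psi (Phi *m cps c p s).

(* Local maximum over D (entrywise-max distance; all norms equivalent). *)
Definition local_max_on_D {R : rcfType} {d K : nat}
  (F : 'M[R]_(d, K) -> R) (Phi : 'M[R]_(d, K)) : Prop :=
  is_dict Phi /\
  exists2 eps : R, 0 < eps &
    forall Psi : 'M[R]_(d, K), is_dict Psi ->
      (forall i j, `|Psi i j - Phi i j| < eps) -> F Psi <= F Phi.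

(* Main.v *)
Require Import Defs.
From HB Require Import structures.
From mathcomp Require Import all_boot all_order all_algebra all_fingroup.
From mathcomp Require Import ring lra.
Set Implicit Arguments. Unset Strict Implicit. Unset Printing Implicit Defensive.
Import Order.TTheory GRing.Theory Num.Theory.

Lemma exists_perm K S (I : {set 'I_K}) : (#|I| <= S)%N -> exists p : 'S_K, I \subset Ip S p.
Proof.
move=> IS.
set e := enum I ++ enum (~: I).
have se : size e = K by by rewrite size_cat -!cardE cardsC card_ord.
have ue : uniq e.
  rewrite cat_uniq !enum_uniq /= andbT; apply/hasPn => x; rewrite !mem_enum inE.
  by move=> /negbTE ->.
have ine : forall x, x \in e by move=> x; rewrite mem_cat !mem_enum inE orbN.
pose q (x : 'I_K) := nth x e x.
have qinj : injective q.
  move=> x y; rewrite /q => h.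
  have hx : (x < size e)%N by rewrite se ltn_ord.
  have hy : (y < size e)%N by rewrite se ltn_ord.
  rewrite (@set_nth_default _ e x y y hy) in h.
  by apply/val_inj/eqP; rewrite -(nth_uniq x hx hy ue) h.
exists (perm qinj)^-1%g; apply/subsetP => i iI.
have ki : (index i e < K)%N by move: (ine i); rewrite -index_mem se.
have qk : perm qinj (Ordinal ki) = i by rewrite permE /q nth_index.
rewrite inE -qk permK /= index_cat mem_enum iI.
by apply: leq_trans IS; rewrite cardE index_mem mem_enum.
Qed.

Local Open Scope ring_scope.

Lemma lt_add1 (R : numDomainType) (x : R) : x < x + 1.
Proof. by rewrite ltrDl ltr01. Qed.

Lemma mul_lt_aux (R : numFieldType) (a x : R) : 0 <= a -> 0 < x -> a * (x / (a + 1)) < x.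
Proof.
move=> a0 x0; have pa : 0 < a + 1 by rewrite ltr_wpDl.
rewrite mulrA ltr_pdivrMr // mulrC ltr_pM2l //.
by rewrite ltrDl ltr01.
Qed.

Lemma invB_aux (R : realFieldType) (x y : R) : x != 0 -> y != 0 -> x^-1 - y^-1 = (y - x) / (x * y).
Proof. by move=> hx hy; field; rewrite hx hy. Qed.

Lemma inv_aux (R : realFieldType) (x y e : R) : y != 0 -> 0 < e ->
  `|x - y| < `|y| / 2 -> `|x - y| < e * (`|y| * (`|y| / 2)) -> `|x^-1 - y^-1| < e.
Proof.
move=> y0 e0 h1 h2.
have ya : 0 < `|y| by rewrite normr_gt0.
have hy : `|y| <= `|x| + `|x - y|.
  by have := ler_normD x (y - x); rewrite addrC subrK distrC.
have hx : `|y| / 2 < `|x| by lra.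
have x0 : x != 0 by rewrite -normr_gt0; apply: le_lt_trans hx; rewrite divr_ge0 // ltW.
rewrite invB_aux //.
rewrite normrM normfV normrM distrC ltr_pdivrMr ?mulr_gt0 ?normr_gt0 //.
apply: (lt_trans h2); rewrite ltr_pM2l // [X in _ < X]mulrC ltr_pM2l //.
Qed.

Section Cont.
Variable R : rcfType.
Variables d K : nat.
Variable Phi : 'M[R]_(d, K).

Definition close (del : R) (Psi : 'M[R]_(d, K)) := forall i j, `|Psi i j - Phi i j| < del.
Definition near (P : 'M[R]_(d, K) -> Prop) :=
  exists2 del : R, 0 < del & forall Psi, close del Psi -> P Psi.
Definition cont (F : 'M[R]_(d, K) -> R) :=
  forall e : R, 0 < e -> near (fun Psi => `|F Psi - F Phi| < e).

Lemma near_mono (P Q : 'M[R]_(d, K) -> Prop) :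
  (forall Psi, P Psi -> Q Psi) -> near P -> near Q.
Proof. by move=> PQ [del d0 H]; exists del => // Psi /H /PQ. Qed.

Lemma near_and (P Q : 'M[R]_(d, K) -> Prop) :
  near P -> near Q -> near (fun Psi => P Psi /\ Q Psi).
Proof.
move=> [d1 d10 H1] [d2 d20 H2]; exists (Num.min d1 d2); first by rewrite lt_min d10.
move=> Psi Hc; split; [apply: H1|apply: H2] => i j; have := Hc i j; rewrite lt_min => /andP[] //.
Qed.

Lemma near_true : near (fun _ => True).
Proof. by exists 1. Qed.

Lemma near_all_seq (T : eqType) (s : seq T) (P : T -> 'M[R]_(d, K) -> Prop) :
  (forall x, x \in s -> near (P x)) -> near (fun Psi => forall x, x \in s -> P x Psi).
Proof.
elim: s => [|a s IH] H; first by exists 1 => // Psi _ x.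
have := near_and (H a (mem_head _ _)) (IH (fun x xs => H x (mem_behead (s := a :: s) xs))).
apply: near_mono => Psi [Ha Hs] x; rewrite inE => /orP[/eqP->//|]; exact: Hs.
Qed.

Lemma near_all (T : finType) (P : T -> 'M[R]_(d, K) -> Prop) :
  (forall x, near (P x)) -> near (fun Psi => forall x, P x Psi).
Proof.
move=> H; have := @near_all_seq T (enum T) P (fun x _ => H x).
by apply: near_mono => Psi HP x; apply: HP; rewrite mem_enum.
Qed.

Lemma cont_const (a : R) : cont (fun _ => a).
Proof. by move=> e e0; exists 1 => // Psi _; rewrite subrr normr0. Qed.

Lemma cont_entry i j : cont (fun Psi => Psi i j).
Proof. by move=> e e0; exists e. Qed.

Lemma cont_add F G : cont F -> cont G -> cont (fun Psi => F Psi + G Psi).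
Proof.
move=> hF hG e e0.
have e2 : 0 < e / 2 by rewrite divr_gt0.
apply: near_mono (near_and (hF _ e2) (hG _ e2)) => Psi [h1 h2].
have -> : F Psi + G Psi - (F Phi + G Phi) = (F Psi - F Phi) + (G Psi - G Phi) by ring.
apply: le_lt_trans (ler_normD _ _) _.
by rewrite [e](splitr e) ltrD.
Qed.

Lemma cont_opp F : cont F -> cont (fun Psi => - F Psi).
Proof.
move=> hF e e0; apply: near_mono (hF _ e0) => Psi h.
by rewrite -opprD normrN.
Qed.

Lemma cont_mul F G : cont F -> cont G -> cont (fun Psi => F Psi * G Psi).
Proof.
move=> hF hG e e0.
have pa : 0 < `|(F Phi)| + 1 by rewrite ltr_wpDl.
have pb : 0 < `|(G Phi)| + 1 by rewrite ltr_wpDl.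
have e1 : 0 < e / 2 / (`|(G Phi)| + 1) by rewrite !divr_gt0.
have e2 : 0 < Num.min 1 (e / 2 / (`|(F Phi)| + 1)) by rewrite lt_min ltr01 !divr_gt0.
apply: near_mono (near_and (hF _ e1) (hG _ e2)) => Psi [h1 h2].
move: h2; rewrite lt_min => /andP[h2 h3].
have -> : F Psi * G Psi - (F Phi) * (G Phi) = (F Psi - (F Phi)) * G Psi + (F Phi) * (G Psi - (G Phi)) by ring.
apply: le_lt_trans (ler_normD _ _) _.
rewrite [e](splitr e) !normrM; apply: ltrD.
  have hb : `|G Psi| <= `|(G Phi)| + 1.
    have : `|G Psi| <= `|G Psi - (G Phi)| + `|(G Phi)|.
      by have := ler_normD (G Psi - (G Phi)) (G Phi); rewrite subrK.
    by move=> /le_trans; apply; rewrite addrC lerD2l ltW.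
  apply: le_lt_trans (ler_wpM2l (normr_ge0 _) hb) _.
  by rewrite -ltr_pdivlMr.
have ha : `|(F Phi)| * `|G Psi - (G Phi)| <= `|(F Phi)| * (e / 2 / (`|(F Phi)| + 1)).
  by rewrite ler_wpM2l // ltW.
apply: le_lt_trans ha _.
apply: (mul_lt_aux (normr_ge0 (F Phi))); by rewrite divr_gt0.
Qed.
Lemma cont_inv F : cont F -> F Phi != 0 -> cont (fun Psi => (F Psi)^-1).
Proof.
move=> hF a0 e e0.
have ya : 0 < `|F Phi| by rewrite normr_gt0.
have d1 : 0 < Num.min (`|F Phi| / 2) (e * (`|F Phi| * (`|F Phi| / 2))).
  by rewrite lt_min divr_gt0 //= mulr_gt0 // mulr_gt0 // divr_gt0.
apply: near_mono (hF _ d1) => Psi; rewrite lt_min => /andP[h1 h2].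
exact: inv_aux.
Qed.

Lemma cont_sum (I : finType) (P : pred I) (F : I -> 'M[R]_(d, K) -> R) :
  (forall i, cont (F i)) -> cont (fun Psi => \sum_(i | P i) F i Psi).
Proof.
move=> hF; rewrite /cont.
elim: (index_enum I) => [|a s IH].
  move=> e e0; apply: near_mono (cont_const 0 e0) => Psi.
  by rewrite !big_nil.
move=> e e0.
case: (boolP (P a)) => Pa.
  apply: near_mono (cont_add (hF a) (fun e e0 => IH e e0) e0) => Psi.
  by rewrite !big_cons Pa.
by apply: near_mono (IH e e0) => Psi; rewrite !big_cons (negbTE Pa).
Qed.

Lemma cont_prod (I : finType) (P : pred I) (F : I -> 'M[R]_(d, K) -> R) :
  (forall i, cont (F i)) -> cont (fun Psi => \prod_(i | P i) F i Psi).
Proof.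
move=> hF; rewrite /cont.
elim: (index_enum I) => [|a s IH].
  move=> e e0; apply: near_mono (cont_const 1 e0) => Psi.
  by rewrite !big_nil.
move=> e e0.
case: (boolP (P a)) => Pa.
  apply: near_mono (cont_mul (hF a) (fun e e0 => IH e e0) e0) => Psi.
  by rewrite !big_cons Pa.
by apply: near_mono (IH e e0) => Psi; rewrite !big_cons (negbTE Pa).
Qed.

Definition mcont m n (M : 'M[R]_(d, K) -> 'M[R]_(m, n)) :=
  forall i j, cont (fun Psi => M Psi i j).

Lemma mcont_id : mcont id.
Proof. by move=> i j; exact: cont_entry. Qed.

Lemma mcont_const m n (A : 'M[R]_(m, n)) : mcont (fun _ => A).
Proof. by move=> i j; exact: cont_const. Qed.

Lemma mcont_mul m n p (A : _ -> 'M[R]_(m, n)) (B : _ -> 'M[R]_(n, p)) :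
  mcont A -> mcont B -> mcont (fun Psi => A Psi *m B Psi).
Proof.
move=> hA hB i j e e0.
have := @cont_sum _ xpredT (fun k Psi => A Psi i k * B Psi k j)
  (fun k => cont_mul (hA i k) (hB k j)) e e0.
by apply: near_mono => Psi; rewrite !mxE.
Qed.

Lemma mcont_tr m n (A : _ -> 'M[R]_(m, n)) : mcont A -> mcont (fun Psi => (A Psi)^T).
Proof. by move=> hA i j e e0; apply: near_mono (hA j i e e0) => Psi; rewrite !mxE. Qed.

Lemma mcont_scale m n f (A : _ -> 'M[R]_(m, n)) : cont f -> mcont A -> mcont (fun Psi => f Psi *: A Psi).
Proof. by move=> hf hA i j e e0; apply: near_mono (cont_mul hf (hA i j) e0) => Psi; rewrite !mxE. Qed.

Lemma mcont_colsub m n n2 (f : 'I_n2 -> 'I_n) (A : _ -> 'M[R]_(m, n)) : mcont A -> mcont (fun Psi => colsub f (A Psi)).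
Proof. by move=> hA i j e e0; apply: near_mono (hA i (f j) e e0) => Psi; rewrite !mxE. Qed.

Lemma mcont_rowcol' n (A : _ -> 'M[R]_n.+1) i0 j0 : mcont A -> mcont (fun Psi => row' i0 (col' j0 (A Psi))).
Proof. by move=> hA i j e e0; apply: near_mono (hA (lift i0 i) (lift j0 j) e e0) => Psi; rewrite !mxE. Qed.

Lemma cont_det n (A : _ -> 'M[R]_n) : mcont A -> cont (fun Psi => \det (A Psi)).
Proof.
move=> hA e e0.
have := @cont_sum (perm_of (ordinal n)) xpredT (fun (s : 'S_n) Psi => (-1) ^+ s * \prod_i A Psi i (s i))
  (fun s => cont_mul (cont_const _) (cont_prod xpredT (fun i => hA i (s i)))) e e0.
by apply: near_mono.
Qed.

Lemma mcont_adj n (A : _ -> 'M[R]_n) : mcont A -> mcont (fun Psi => \adj (A Psi)).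
Proof.
case: n A => [|n] A hA i j; first by case: i.
move=> e e0.
have := cont_mul (cont_const ((-1) ^+ (j + i))) (cont_det (mcont_rowcol' j i hA)) e0.
by apply: near_mono => Psi; rewrite !mxE.
Qed.
End Cont.

Section LinAlg.
Variable R : rcfType.

Lemma rv_sq0 n (u : 'rV[R]_n) : (u *m u^T) 0 0 = 0 -> u = 0.
Proof.
rewrite !mxE => hs.
have H0 : forall i : 'I_n, true -> 0 <= u 0 i * u^T i 0 by move=> i _; rewrite mxE -expr2 sqr_ge0.
have H := psumr_eq0P H0 hs.
apply/rowP => j; rewrite mxE; have := H j isT; rewrite mxE -expr2.
by move/eqP; rewrite sqrf_eq0 => /eqP.
Qed.

Lemma gram_unit m n (M : 'M[R]_(m, n)) : row_free M -> (M *m M^T) \in unitmx.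
Proof.
move=> fM; rewrite unitmxE unitfE; apply/negP => /det0P [v v0 hv].
have : v *m M = 0.
  by apply: rv_sq0; rewrite trmx_mul mulmxA -(mulmxA v) hv mul0mx mxE.
move=> vM; case/negP: v0; apply/eqP; apply: (row_free_inj fM).
by rewrite vM mul0mx.
Qed.

Lemma proj_unique m n (P Q : 'M[R]_m) (X : 'M[R]_(m, n)) B B' :
  P^T = P -> Q^T = Q -> P *m X = X -> Q *m X = X -> P = X *m B -> Q = X *m B' -> P = Q.
Proof.
move=> sP sQ PX QX eP eQ.
have QP : Q *m P = P by rewrite eP mulmxA QX.
have PQ : P *m Q = Q by rewrite eQ mulmxA PX.
by rewrite -QP -[Q in Q *m P]sQ -[P in _ *m P]sP -trmx_mul PQ sQ.
Qed.

Definition Pexp m n (X : 'M[R]_(m, n)) : 'M[R]_m := X *m invmx (X^T *m X) *m X^T.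

Lemma Pexp_sym m n (X : 'M[R]_(m, n)) : (Pexp X)^T = Pexp X.
Proof.
by rewrite /Pexp !trmx_mul trmxK trmx_inv trmx_mul trmxK mulmxA.
Qed.

Lemma Pexp_fix m n (X : 'M[R]_(m, n)) : (X^T *m X) \in unitmx -> Pexp X *m X = X.
Proof. by move=> u; rewrite /Pexp -!mulmxA mulVmx ?mulmx1. Qed.

Lemma Pexp_idem m n (X : 'M[R]_(m, n)) : (X^T *m X) \in unitmx -> Pexp X *m Pexp X = Pexp X.
Proof. by move=> u; rewrite {2}/Pexp -[X *m _ *m X^T]mulmxA mulmxA Pexp_fix // mulmxA. Qed.

Lemma Pexp_tr m n (X : 'M[R]_(m, n)) : (X^T *m X) \in unitmx -> \tr (Pexp X) = n%:R.
Proof. by move=> u; rewrite /Pexp mxtrace_mulC mulmxA mulmxV // mxtrace1. Qed.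

Lemma row_full_trC m n (A : 'M[R]_(m, n)) : row_full A -> row_free A^T.
Proof. by rewrite /row_free /row_full mxrank_tr. Qed.

Lemma colbase_unit m n (X : 'M[R]_(m, n)) : ((col_base X)^T *m col_base X) \in unitmx.
Proof.
have := gram_unit (row_full_trC (col_base_full X)); by rewrite trmxK.
Qed.

Lemma pinv_proj m n (X : 'M[R]_(m, n)) : X *m pinv X = Pexp (col_base X).
Proof.
rewrite /pinv /Pexp.
have E := mulmx_base X; have uF := gram_unit (row_base_free X).
move: E uF; move: (col_base X) (row_base X) => C F E uF.
rewrite -{1}E -!mulmxA; congr (_ *m _); rewrite !mulmxA mulmxV // mul1mx //.
Qed.

Lemma projX_sym m n (X : 'M[R]_(m, n)) : (X *m pinv X)^T = X *m pinv X.
Proof. by rewrite pinv_proj Pexp_sym. Qed.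

Lemma projX_fix m n (X : 'M[R]_(m, n)) : (X *m pinv X) *m X = X.
Proof.
rewrite pinv_proj; have E := mulmx_base X; have u := colbase_unit X.
move: E u; move: (col_base X) (row_base X) => C F E u.
have h : Pexp C *m (C *m F) = C *m F by rewrite mulmxA Pexp_fix.
by rewrite E in h.
Qed.

Lemma projX_full m n (X : 'M[R]_(m, n)) : (X^T *m X) \in unitmx -> X *m pinv X = Pexp X.
Proof.
move=> u; apply: (proj_unique (B := pinv X) (B' := invmx (X^T *m X) *m X^T)).
- exact: projX_sym.
- exact: Pexp_sym.
- exact: projX_fix.
- exact: Pexp_fix.
- by [].
- by rewrite /Pexp mulmxA.
Qed.
End LinAlg.

Section Signs.
Variable R : rcfType.

Definition sq n (v : 'cV[R]_n) : R := \sum_(k < n) v k 0 ^+ 2.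

Lemma sq_ge0 n (v : 'cV[R]_n) : 0 <= sq v.
Proof. by apply: sumr_ge0 => i _; rewrite sqr_ge0. Qed.

Lemma norm2_sq n (v : 'cV[R]_n) : norm2 v ^+ 2 = sq v.
Proof. by rewrite /norm2 sqr_sqrtr // sq_ge0. Qed.

Definition flip K (i : 'I_K) (s : {ffun 'I_K -> bool}) : {ffun 'I_K -> bool} :=
  [ffun x => if x == i then ~~ s x else s x].

Lemma flipK K (i : 'I_K) : involutive (flip i).
Proof. by move=> s; apply/ffunP => x; rewrite !ffunE; case: eqP => // _; rewrite negbK. Qed.

Lemma sign_sum K (i j : 'I_K) :
  \sum_(s : {ffun 'I_K -> bool}) ((-1) ^+ s i * (-1) ^+ s j : R) = (i == j)%:R * (2 ^ K)%:R.
Proof.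
case: eqP => [<-|/eqP ij].
  rewrite mul1r (eq_bigr (fun _ => 1)); last by move=> s _; rewrite -expr2 sqrr_sign.
  by rewrite sumr_const card_ffun card_bool card_ord.
rewrite mul0r; set S := \sum_s _.
have : S = - S.
  rewrite {1}/S (reindex_inj (inv_inj (@flipK K i))) /= -sumrN.
  apply: eq_bigr => s _; rewrite !ffunE eqxx eq_sym (negbTE ij).
  by case: (s i); rewrite /= ?expr0 ?expr1 ?mulN1r ?mul1r ?opprK.
by move/eqP; rewrite -addr_eq0 -mulr2n mulrn_eq0 /= => /eqP.
Qed.

Lemma sign_sq K (a : 'I_K -> R) :
  \sum_(s : {ffun 'I_K -> bool}) (\sum_i (-1) ^+ s i * a i) ^+ 2 = (2 ^ K)%:R * \sum_i a i ^+ 2.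
Proof.
under eq_bigr => s _ do rewrite expr2 big_distrlr /=.
rewrite exchange_big /= big_distrr /=; apply: eq_bigr => i _.
rewrite exchange_big /= (bigD1 i) //= [X in _ + X]big1 ?addr0 => [|j ji].
  have := sign_sum i i; rewrite eqxx mul1r => <-.
  rewrite mulr_suml; apply: eq_bigr => s _; ring.
have : \sum_(s : {ffun 'I_K -> bool}) ((-1) ^+ s i * (-1) ^+ s j : R) = 0.
  by rewrite sign_sum eq_sym (negbTE ji) mul0r.
move=> h; rewrite (eq_bigr (fun s : {ffun 'I_K -> bool} => ((-1) ^+ s i * (-1) ^+ s j) * (a i * a j))) => [|s _]; last by ring.
by rewrite -mulr_suml h mul0r.
Qed.

Lemma sum_sq_cps d K (M : 'M[R]_(d, K)) (c : 'cV[R]_K) (p : 'S_K) :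
  \sum_(s : {ffun 'I_K -> bool}) sq (M *m cps c p s) =
  (2 ^ K)%:R * \sum_i c (p i) 0 ^+ 2 * sq (col i M).
Proof.
rewrite /sq exchange_big /=.
under eq_bigr => k _ do under eq_bigr => s _ do rewrite mxE.
under eq_bigr => k _ do under eq_bigr => s _ do under eq_bigr => i _ do rewrite mxE mulrC -mulrA.
under eq_bigr => k _ do rewrite sign_sq.
rewrite -big_distrr /=; congr (_ * _); rewrite exchange_big /=; apply: eq_bigr => i _.
rewrite big_distrr /=; apply: eq_bigr => k _; rewrite !mxE; ring.
Qed.

Lemma sq_mx n (v : 'cV[R]_n) : sq v = (v^T *m v) 0 0.
Proof. by rewrite /sq mxE; apply: eq_bigr => k _; rewrite mxE expr2. Qed.

Lemma sq_proj n (P : 'M[R]_n) (v : 'cV[R]_n) : P^T = P -> P *m P = P -> sq (P *m v) <= sq v.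
Proof.
move=> sP iP.
have e : sq v = sq (P *m v) + sq ((1%:M - P) *m v).
  have ea : forall (X Y : 'M[R]_1), X 0 0 + Y 0 0 = (X + Y) 0 0 by move=> X Y; rewrite mxE.
  rewrite !sq_mx ea; congr (_ 0 0).
  have ht : (1%:M - P)^T = 1%:M - P by rewrite linearB /= trmx1 sP.
  have h1 : (1%:M - P) *m (1%:M - P) = 1%:M - P by rewrite mulmxBl mul1mx mulmxBr mulmx1 iP subrr subr0.
  rewrite !trmx_mul sP ht !mulmxA -(mulmxA _ P P) -(mulmxA _ (1%:M - P) (1%:M - P)) iP h1.
  by rewrite -mulmxDl -mulmxDr addrC subrK mulmx1.
by rewrite e lerDl sq_ge0.
Qed.

Lemma tf_trace d K (Phi : 'M[R]_(d, K)) (A : R) (P : 'M[R]_d) :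
  tight_frame Phi A -> P^T = P -> P *m P = P ->
  \sum_i sq (P *m col i Phi) = A * \tr P.
Proof.
move=> tf sP iP.
have sPe : forall a b, P a b = P b a by move=> a b; rewrite -{1}sP mxE.
have e1 : forall i k, (P *m col i Phi) k 0 = dotv (col i Phi) (col k P).
  move=> i k; rewrite /dotv mxE; apply: eq_bigr => l _.
  by rewrite !mxE mulrC sPe.
rewrite /sq exchange_big /=.
under eq_bigr => k _ do under eq_bigr => i _ do rewrite e1.
under eq_bigr => k _ do rewrite tf norm2_sq.
rewrite -big_distrr /=; congr (_ * _).
rewrite /mxtrace; apply: eq_bigr => k _.
rewrite -{2}iP mxE /sq; apply: eq_bigr => l _.
by rewrite mxE expr2 sPe.
Qed.
End Signs.

Lemma card_lt_set K S : (S <= K)%N -> #|[set i : 'I_K | (i < S)%N]| = S.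
Proof.
move=> SK.
have -> : [set i : 'I_K | (i < S)%N] = [set widen_ord SK i | i : 'I_S].
  apply/setP => x; rewrite inE; apply/idP/imsetP => [xS|[i _ ->]]; last exact: (ltn_ord i).
  by exists (Ordinal xS) => //; apply: val_inj.
by rewrite card_imset ?card_ord //; by move=> a b /(congr1 val) /= /val_inj.
Qed.

Lemma card_Ip K S (p : 'S_K) : (S <= K)%N -> #|Ip S p| = S.
Proof.
move=> SK; apply: etrans (card_lt_set SK); rewrite -(card_preimset [set i : 'I_K | (i < S)%N] (@perm_inj _ p)).
by apply: eq_card => x; rewrite !inE.
Qed.

Lemma Ip_tperm K S (I : {set 'I_K}) (j j0 : 'I_K) (q : 'S_K) :
  j \notin I -> j0 \notin I -> Ip S q = I -> Ip S (tperm j j0 * q) = I.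
Proof.
move=> jI j0I E; rewrite -E /Ip !inE in jI j0I *; apply/setP => x; rewrite !inE permM.
by case: tpermP => [->|->|//]; rewrite (negbTE jI) (negbTE j0I).
Qed.

Section Avg.
Variable R : rcfType.

Lemma col_mulmx m n p (A : 'M[R]_(m, n)) (B : 'M[R]_(n, p)) i : col i (A *m B) = A *m col i B.
Proof. by apply/colP => k; rewrite !mxE; apply: eq_bigr => l _; rewrite !mxE. Qed.

Lemma W_eq K S (c : 'cV[R]_K) (I : {set 'I_K}) (j j0 : 'I_K) :
  j \notin I -> j0 \notin I ->
  \sum_(p : 'S_K | Ip S p == I) c (p j) 0 ^+ 2 = \sum_(p : 'S_K | Ip S p == I) c (p j0) 0 ^+ 2.
Proof.
move=> jI j0I; rewrite (reindex_inj (mulgI (tperm j j0))) /=.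
apply: eq_big => [p|p _]; last by rewrite permM tpermL.
apply/eqP/eqP => [h|h]; last exact: Ip_tperm.
by have := Ip_tperm jI j0I h; rewrite mulgA tperm2 mul1g.
Qed.

Lemma avg_ineq d K S (Phi : 'M[R]_(d, K)) (c : 'cV[R]_K) (A : R)
  (Pf Qf : {set 'I_K} -> 'M[R]_d) :
  (S <= K)%N ->
  tight_frame Phi A ->
  (forall i j : 'I_K, (i <= j)%N -> c j 0 <= c i 0) ->
  (forall i : 'I_K, 0 <= c i 0) ->
  (forall I : {set 'I_K}, #|I| = S ->
     [/\ (Pf I)^T = Pf I, Pf I *m Pf I = Pf I, (Qf I)^T = Qf I, Qf I *m Qf I = Qf I
       & \tr (Pf I) = \tr (Qf I)]) ->
  (forall I : {set 'I_K}, #|I| = S -> forall i, i \in I -> Qf I *m col i Phi = col i Phi) ->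
  \sum_(p : 'S_K) \sum_(s : {ffun 'I_K -> bool}) sq (Pf (Ip S p) *m (Phi *m cps c p s)) <=
  \sum_(p : 'S_K) \sum_(s : {ffun 'I_K -> bool}) sq (Qf (Ip S p) *m (Phi *m cps c p s)).
Proof.
move=> SK tf cdec cpos hPQ hQ.
have E : forall (P : {set 'I_K} -> 'M[R]_d) p,
    \sum_(s : {ffun 'I_K -> bool}) sq (P (Ip S p) *m (Phi *m cps c p s)) =
    (2 ^ K)%:R * \sum_i c (p i) 0 ^+ 2 * sq (P (Ip S p) *m col i Phi).
  move=> P p; under eq_bigr => s _ do rewrite mulmxA.
  by rewrite sum_sq_cps; under eq_bigr => i _ do rewrite col_mulmx.
rewrite !(eq_bigr _ (fun p _ => E _ p)) -!big_distrr /= ler_pM2l ?ltr0n ?expn_gt0 //.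
rewrite -subr_ge0 -sumrB (partition_big (Ip S) xpredT) //=.
apply: sumr_ge0 => I _.
case: (pickP (fun p : 'S_K => Ip S p == I)) => [p0 /eqP hp0|none]; last by rewrite big_pred0.
have cI : #|I| = S by rewrite -hp0 card_Ip.
case: (hPQ I cI) => sP iP sQ iQ tPQ.
set delta := fun i => sq (Qf I *m col i Phi) - sq (Pf I *m col i Phi).
set W := fun i => \sum_(p : 'S_K | Ip S p == I) c (p i) 0 ^+ 2.
have -> : \sum_(p | Ip S p == I)
     (\sum_i c (p i) 0 ^+ 2 * sq (Qf (Ip S p) *m col i Phi) -
      \sum_i c (p i) 0 ^+ 2 * sq (Pf (Ip S p) *m col i Phi)) = \sum_i W i * delta i.
  rewrite (eq_bigr (fun p : 'S_K => \sum_i c (p i) 0 ^+ 2 * delta i)) => [|p /eqP ->]; last first.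
    by rewrite -sumrB; apply: eq_bigr => i _; rewrite mulrBr.
  by rewrite exchange_big /=; apply: eq_bigr => i _; rewrite mulr_suml.
have hd : forall i, i \in I -> 0 <= delta i.
  by move=> i iI; rewrite subr_ge0 hQ // sq_proj.
have hs : \sum_i delta i = 0.
  by rewrite sumrB (tf_trace tf sQ iQ) (tf_trace tf sP iP) tPQ subrr.
have W0 : forall i, 0 <= W i by move=> i; apply: sumr_ge0 => p _; rewrite sqr_ge0.
case: (pickP (fun j => j \notin I)) => [j0 j0I|allI]; last first.
  apply: sumr_ge0 => i _; rewrite mulr_ge0 // hd //.
  by have := allI i; rewrite /= => /negbFE.
have -> : \sum_i W i * delta i = \sum_i (W i - W j0) * delta i.
  symmetry; rewrite (eq_bigr (fun i => W i * delta i - W j0 * delta i)) => [|i _]; last by rewrite mulrBl.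
  by rewrite sumrB -mulr_sumr hs mulr0 subr0.
apply: sumr_ge0 => i _.
case: (boolP (i \in I)) => iI; last by rewrite /W (@W_eq _ S c _ _ _ iI j0I) subrr mul0r.
rewrite mulr_ge0 ?hd // subr_ge0 /W; apply: ler_sum => p /eqP hp.
have pi : (p i < S)%N by move: iI; rewrite -hp inE.
have pj : ~~ (p j0 < S)%N by move: j0I; rewrite -hp inE.
have hc : c (p j0) 0 <= c (p i) 0.
  by apply: cdec; rewrite leq_eqVlt; apply/orP; right; apply: leq_trans pi _; rewrite leqNgt.
by rewrite !expr2 ler_pM.
Qed.
End Avg.

Section Indep.
Variable R : rcfType.

Definition Esel K (I : {set 'I_K}) : 'M[R]_(K, #|I|) := \matrix_(a, j) (a == enum_val j)%:R.

Lemma subcols_E d K (Psi : 'M[R]_(d, K)) I : subcols Psi I = Psi *m Esel I.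
Proof.
apply/matrixP => a j; rewrite !mxE (bigD1 (enum_val j)) //= big1 ?addr0 => [|b bj].
  by rewrite mxE eqxx mulr1.
by rewrite mxE (negbTE bj) mulr0.
Qed.

Lemma Esel_supp K n (L : {set 'I_K}) (U : 'M[R]_(K, n)) :
  (forall a b, a \notin L -> U a b = 0) -> Esel L *m ((Esel L)^T *m U) = U.
Proof.
move=> hU; apply/matrixP => a b; rewrite mxE.
have e1 : forall j, ((Esel L)^T *m U) j b = U (enum_val j) b.
  move=> j; rewrite mxE (bigD1 (enum_val j)) //= big1 ?addr0 => [|c cj].
    by rewrite !mxE eqxx mul1r.
  by rewrite !mxE (negbTE cj) mul0r.
under eq_bigr => j _ do rewrite e1 mxE.
case: (boolP (a \in L)) => aL.
  rewrite (bigD1 (enum_rank_in aL a)) //= enum_rankK_in // eqxx mul1r big1 ?addr0 // => j hj.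
  case: eqP => [ej|]; last by rewrite mul0r.
  by case/eqP: hj; apply: enum_val_inj; rewrite enum_rankK_in // -ej.
rewrite hU // big1 // => j _; case: eqP => [ej|]; last by rewrite mul0r.
by move: aL; rewrite ej enum_valP.
Qed.

Definition Hyp d K S (Phi : 'M[R]_(d, K)) (c : 'cV[R]_K) :=
  forall (p : 'S_K) (s : {ffun 'I_K -> bool}),
     norm2 (projI (Ip S p) Phi *m (Phi *m cps c p s)) >
     \big[Num.max/0]_(I : {set 'I_K} | (#|I| <= S)%N && (I != Ip S p))
        norm2 (projI I Phi *m (Phi *m cps c p s)).

Lemma proj_eq_col d K (Phi : 'M[R]_(d, K)) (L J : {set 'I_K}) M1 M2 :
  subcols Phi J = subcols Phi L *m M1 -> subcols Phi L = subcols Phi J *m M2 ->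
  projI L Phi = projI J Phi.
Proof.
move=> h1 h2; rewrite /projI.
apply: (proj_unique (X := subcols Phi L) (B := pinv (subcols Phi L))
                    (B' := M1 *m pinv (subcols Phi J))).
- exact: projX_sym.
- exact: projX_sym.
- exact: projX_fix.
- by rewrite {2}h2 {1}h2 mulmxA projX_fix.
- by [].
- by rewrite h1 mulmxA.
Qed.

Lemma indep d K S (Phi : 'M[R]_(d, K)) (c : 'cV[R]_K) :
  (S <= K)%N -> Hyp S Phi c ->
  forall I : {set 'I_K}, (#|I| <= S)%N -> ((subcols Phi I)^T *m subcols Phi I) \in unitmx.
Proof.
move=> SK H I IS; apply/negPn/negP; rewrite unitmxE unitfE negbK => /det0P [v v0 hv].
set X := subcols Phi I.
have Xv : X *m v^T = 0.
  have : v *m X^T = 0.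
    by apply: rv_sq0; rewrite trmx_mul trmxK mulmxA -(mulmxA v) hv mul0mx mxE.
  by move/(congr1 trmx); rewrite trmx_mul trmxK trmx0.
set u := Esel I *m v^T.
have Phiu : Phi *m u = 0 by rewrite /u mulmxA -subcols_E.
have [j vj] : exists j, v 0 j != 0.
  apply/existsP; apply: contraR v0 => /existsPn h; apply/eqP/rowP => j.
  by rewrite mxE; apply/eqP; rewrite -[_ == _]negbK h.
set k := enum_val j.
have uk : u k 0 = v 0 j.
  rewrite mxE (bigD1 j) //= big1 ?addr0 => [|j' hj']; first by rewrite !mxE eqxx mul1r.
  by rewrite !mxE; case: eqP => [/enum_val_inj ej|]; [case/eqP: hj'|rewrite mul0r].
have usupp : forall a, a \notin I -> u a 0 = 0.
  move=> a aI; rewrite mxE big1 // => j' _; rewrite mxE; case: eqP => [ej|]; last by rewrite mul0r.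
  by move: aI; rewrite ej enum_valP.
clearbody u.
have [p IL] := exists_perm IS.
set L := Ip S p.
have kL : k \in L by apply: (subsetP IL); exact: enum_valP.
set J := L :\ k.
have JL : J \subset L by exact: subsetDl.
have cL : #|L| = S by exact: card_Ip.
have cJ : (#|J| <= S)%N by rewrite -cL (cardsD1 k L) kL.
have JnL : J != L by apply/eqP => e; move: kL; rewrite -e !inE eqxx.
have h1 : subcols Phi J = subcols Phi L *m ((Esel L)^T *m Esel J).
  rewrite !subcols_E -mulmxA Esel_supp // => a b aL; rewrite mxE.
  case: eqP => // ea; case/negP: aL; rewrite ea; apply: (subsetP JL); exact: enum_valP.
set V := Esel L - (u k 0)^-1 *: (u *m row k (Esel L)).
have PV : Phi *m V = Phi *m Esel L.
  by rewrite /V mulmxBr -scalemxAr mulmxA Phiu mul0mx scaler0 subr0.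
have Vsupp : forall a b, a \notin J -> V a b = 0.
  move=> a b aJ; rewrite /V !mxE big_ord1 !mxE.
  case: (eqVneq a k) => [->|ak].
    by rewrite mulrA mulVf ?uk // mul1r subrr.
  have aL : a \notin L by move: aJ; rewrite !inE ak.
  have aI : a \notin I by apply: contra aL; apply: (subsetP IL).
  rewrite (_ : u a ord0 = 0); last exact: usupp.
  rewrite mul0r mulr0 subr0; case: eqP => // ea.
  by move: aL; rewrite ea enum_valP.
have h2 : subcols Phi L = subcols Phi J *m ((Esel J)^T *m V).
  by rewrite !subcols_E -PV -mulmxA Esel_supp.
have PJL := proj_eq_col h1 h2.
have := H p [ffun => false]; move/bigmax_ltP => [_ /(_ J)].
by rewrite cJ JnL -PJL ltxx => /(_ isT).
Qed.
End Indep.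

Section Final.
Variable R : rcfType.

Lemma abs_bounds (x x0 e : R) : `|x - x0| < e -> x0 - e < x /\ x < x0 + e.
Proof. by rewrite ltr_norml => /andP[h1 h2]; split; lra. Qed.

Lemma sq_lt (a b : R) : 0 <= a -> a < b -> a ^+ 2 < b ^+ 2.
Proof.
move=> a0 ab; have b0 : 0 < b by apply: le_lt_trans ab.
by rewrite !expr2; apply: (le_lt_trans (ler_wpM2l a0 (ltW ab))); rewrite ltr_pM2r.
Qed.

Definition Gm d K (I : {set 'I_K}) (Psi : 'M[R]_(d, K)) := (subcols Psi I)^T *m subcols Psi I.
Definition Pform d K (I : {set 'I_K}) (Psi : 'M[R]_(d, K)) :=
  subcols Psi I *m ((\det (Gm I Psi))^-1 *: \adj (Gm I Psi)) *m (subcols Psi I)^T.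

Lemma projI_Pform d K (I : {set 'I_K}) (Psi : 'M[R]_(d, K)) :
  Gm I Psi \in unitmx -> projI I Psi = Pform I Psi.
Proof. by move=> u; rewrite /projI projX_full // /Pexp /invmx -/(Gm I Psi) u. Qed.

Lemma projI_Pexp d K (I : {set 'I_K}) (Psi : 'M[R]_(d, K)) :
  Gm I Psi \in unitmx -> projI I Psi = Pexp (subcols Psi I).
Proof. by move=> u; rewrite /projI projX_full. Qed.

Lemma mcont_subcols d K (Phi : 'M[R]_(d, K)) I : mcont Phi (fun Psi => subcols Psi I).
Proof. exact: (mcont_colsub _ (mcont_id Phi)). Qed.

Lemma mcont_Gm d K (Phi : 'M[R]_(d, K)) I : mcont Phi (Gm I).
Proof. have h := mcont_mul (mcont_tr (@mcont_subcols _ _ Phi I)) (@mcont_subcols _ _ Phi I). exact: h. Qed.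

Lemma cont_g d K (Phi : 'M[R]_(d, K)) I (y : 'cV[R]_d) :
  \det (Gm I Phi) != 0 -> cont Phi (fun Psi => sq (Pform I Psi *m y)).
Proof.
move=> dn.
have hP : mcont Phi (Pform I).
  apply: mcont_mul; last exact: mcont_tr (@mcont_subcols _ _ Phi I).
  apply: mcont_mul; first exact: (@mcont_subcols _ _ Phi I).
  apply: mcont_scale; last exact: mcont_adj (@mcont_Gm _ _ Phi I).
  exact: cont_inv (cont_det (@mcont_Gm _ _ Phi I)) dn.
have hv := mcont_mul hP (mcont_const Phi y).
rewrite /sq => e e0.
have hsq : forall k, cont Phi (fun Psi => (Pform I Psi *m y) k 0 ^+ 2).
  move=> k e' e'0; have := cont_mul (hv k 0) (hv k 0) e'0.
  by apply: near_mono => Psi; rewrite /= !expr2.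
exact: (cont_sum xpredT hsq e0).
Qed.
End Final.

Lemma col_subcols (R : rcfType) d K (Phi : 'M[R]_(d, K)) (I : {set 'I_K}) j :
  col j (subcols Phi I) = col (enum_val j) Phi.
Proof. by apply/colP => k; rewrite !mxE. Qed.

Theorem theorem5 (R : rcfType) (d K S : nat) (Phi : 'M[R]_(d, K))
  (c : 'cV[R]_K) :
  is_dict Phi ->
  tight_frame Phi (K%:R / d%:R) ->
  (1 <= S <= K)%N ->
  (forall i j : 'I_K, (i <= j)%N -> c j 0 <= c i 0) ->
  (forall i : 'I_K, 0 <= c i 0) ->
  norm2 c = 1 ->
  (forall (p : 'S_K) (s : {ffun 'I_K -> bool}),
     norm2 (projI (Ip S p) Phi *m (Phi *m cps c p s)) >
     \big[Num.max/0]_(I : {set 'I_K} | (#|I| <= S)%N && (I != Ip S p))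
        norm2 (projI I Phi *m (Phi *m cps c p s))) ->
  local_max_on_D (objective S Phi c) Phi.
Proof.
move=> dict tf /andP[S1 SK] cdec cpos nc H.
split => //.
have uPhi : forall I : {set 'I_K}, (#|I| <= S)%N -> Gm I Phi \in unitmx.
  by move=> I IS; exact: (indep SK H IS).
have N1 : near Phi (fun Psi => forall I : {set 'I_K}, (#|I| <= S)%N -> Gm I Psi \in unitmx).
  apply: near_all => I.
  case: (boolP (#|I| <= S)%N) => IS; last by exists 1 => // Psi _; rewrite (negbTE IS).
  have dn : \det (Gm I Phi) != 0 by rewrite -unitfE -unitmxE uPhi.
  have dp : 0 < `|\det (Gm I Phi)| by rewrite normr_gt0.
  have := cont_det (@mcont_Gm _ _ _ Phi I) dp.
  apply: near_mono => Psi h _.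
  rewrite unitmxE unitfE; apply/negP => /eqP h0; move: h; rewrite h0 sub0r normrN ltxx.
  by [].
have detn : forall I : {set 'I_K}, (#|I| <= S)%N -> \det (Gm I Phi) != 0.
  by move=> I IS; rewrite -unitfE -unitmxE uPhi.
have cIp : forall p : 'S_K, (#|Ip S p| <= S)%N by move=> p; rewrite card_Ip.
have N2 : near Phi (fun Psi => forall (p : 'S_K) (s : {ffun 'I_K -> bool}) (I : {set 'I_K}),
    (#|I| <= S)%N && (I != Ip S p) ->
    sq (Pform I Psi *m (Phi *m cps c p s)) < sq (Pform (Ip S p) Psi *m (Phi *m cps c p s))).
  apply: near_all => p; apply: near_all => s; apply: near_all => I.
  case: (boolP ((#|I| <= S)%N && (I != Ip S p))) => cI; last first.
    by exists 1 => // Psi _; rewrite (negbTE cI).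
  set y := Phi *m cps c p s.
  have IS : (#|I| <= S)%N by case/andP: cI.
  have hlt : norm2 (projI I Phi *m y) < norm2 (projI (Ip S p) Phi *m y).
    by have := H p s; move/bigmax_ltP => [_]; apply.
  have := sq_lt (sqrtr_ge0 _) hlt; rewrite !norm2_sq !projI_Pform ?uPhi // => glt.
  set g1 := sq (Pform I Phi *m y) in glt *; set g2 := sq (Pform (Ip S p) Phi *m y) in glt *.
  have gp : 0 < (g2 - g1) / 2 by rewrite divr_gt0 // subr_gt0.
  have := near_and (cont_g y (detn I IS) gp) (cont_g y (detn _ (cIp p)) gp).
  apply: near_mono => Psi [h1 h2] _.
  have [_ b1] := abs_bounds h1; have [b2 _] := abs_bounds h2.
  rewrite -/g1 in b1; rewrite -/g2 in b2; lra.
have [del del0 Hdel] := near_and N1 N2.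
exists del => // Psi _ cPsi; have [U1 U2] := Hdel Psi cPsi.
rewrite /objective ler_pM2l; last first.
  by rewrite invr_gt0 ltr0n muln_gt0 expn_gt0 fact_gt0.
apply: (@le_trans _ _ (\sum_(p : 'S_K) \sum_(s : {ffun 'I_K -> bool})
    sq (projI (Ip S p) Psi *m (Phi *m cps c p s)))).
  apply: ler_sum => p _; apply: ler_sum => s _.
  apply/bigmax_leP; split; first exact: sq_ge0.
  move=> I IS; rewrite norm2_sq !projI_Pform ?U1 ?cIp //.
  case: (eqVneq I (Ip S p)) => [->//|nI].
  by apply: ltW; apply: U2; rewrite IS nI.
apply: (@le_trans _ _ (\sum_(p : 'S_K) \sum_(s : {ffun 'I_K -> bool})
    sq (projI (Ip S p) Phi *m (Phi *m cps c p s)))).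
  apply: (avg_ineq (Pf := fun I => projI I Psi) (Qf := fun I => projI I Phi) SK tf cdec cpos).
    move=> I cI; have IS : (#|I| <= S)%N by rewrite cI.
    rewrite !projI_Pexp ?U1 ?uPhi //; split.
    - exact: Pexp_sym.
    - by rewrite Pexp_idem // -/(Gm I Psi) U1.
    - exact: Pexp_sym.
    - by rewrite Pexp_idem // -/(Gm I Phi) uPhi.
    - by rewrite !Pexp_tr // -/(Gm _ _) ?U1 ?uPhi.
  move=> I cI i iI; have IS : (#|I| <= S)%N by rewrite cI.
  rewrite projI_Pexp ?uPhi // -(enum_rankK_in iI iI) -col_subcols -col_mulmx Pexp_fix //.
  by rewrite -/(Gm I Phi) uPhi.
apply: ler_sum => p _; apply: ler_sum => s _.
rewrite -norm2_sq /best_proj; apply: le_bigmax_cond; exact: cIp.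
Qed.
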